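(* With notation as below, fix $k\in[N]$ and let $\tau^{(b_k\leftrightarrow c_k)}$ and $\tau^{\mathrm{adj}}$ be as defined below. Then for all $\mathbf s\in\mathbb Z^n$ and all distinct $i,j\in\{1,\dots,n\}$ (whenever the denominators are nonzero), $$(\alpha_i-\alpha_j)\frac{\tau^{(b_k\leftrightarrow c_k)}(\mathbf s)\,\tau^{(b_k\leftrightarrow c_k)}(\mathbf s+e_i+e_j)}{\tau^{(b_k\leftrightarrow c_k)}(\mathbf s+e_i)\,\tau^{(b_k\leftrightarrow c_k)}(\mathbf s+e_j)}=(\alpha_i-\alpha_j)\frac{\tau^{\mathrm{adj}}(\mathbf s)\,\tau^{\mathrm{adj}}(\mathbf s+e_i+e_j)}{\tau^{\mathrm{adj}}(\mathbf s+e_i)\,\tau^{\mathrm{adj}}(\mathbf s+e_j)};$$ that is, the $N$-soliton solution (vertex parameters) obtained by swapping $b_k$ and $c_k$ coincides with the one obtained by keeping $b_k,c_k$ and replacing $A_j\mapsto A_j/Z_{k,j}$ ($j\neq k$), $A_k\mapsto 1/A_k$.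
   Context: Let $\alpha_1,\dots,\alpha_n\in\mathbb R$, $f(t)=\prod_{j}(t-\alpha_j)$, $N\ge1$, and for $i\in[N]=\{1,\dots,N\}$ let $A_i\neq0$, $b_i,c_i\in\mathbb R\setminus\{\alpha_1,\dots,\alpha_n\}$ with $f(b_i)=f(c_i)$, with $b_i\neq c_j$, $b_i\ne b_j$, $c_i\neq c_j$ for $i\neq j$. $e_1,\dots,e_n$ is the standard basis of $\mathbb Z^n$. Put $B_{i,j}=\frac{b_i-\alpha_j}{c_i-\alpha_j}$, $Z_{i,j}=\frac{(b_i-b_j)(c_i-c_j)}{(b_i-c_j)(c_i-b_j)}$, $f_i(\mathbf s)=A_i\prod_jB_{i,j}^{\mathbf s_j}$, $\tau(\mathbf s)=\sum_{T\subseteq[N]}\prod_{\{i<j\}\subseteq T}Z_{i,j}\prod_{i\in T}f_i(\mathbf s)$. $\tau^{(b_k\leftrightarrow c_k)}$ is $\tau$ computed after interchanging the values of $b_k$ and $c_k$; $\tau^{\mathrm{adj}}$ is $\tau$ computed with $A_j$ replaced by $A_j/Z_{k,j}$ for $j\ne k$ and $A_k$ replaced by $1/A_k$. *)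

(* Defs.v *)
From mathcomp Require Import all_boot all_order all_algebra.
Set Implicit Arguments. Unset Strict Implicit. Unset Printing Implicit Defensive.
Import Order.TTheory GRing.Theory Num.Theory.
Local Open Scope ring_scope.

Definition fpoly (R : realFieldType) (n : nat) (alpha : 'I_n -> R) (t : R) : R :=
  \prod_(j < n) (t - alpha j).

Definition Bc (R : realFieldType) (n N : nat) (alpha : 'I_n -> R) (b c : 'I_N -> R)
  (i : 'I_N) (j : 'I_n) : R := (b i - alpha j) / (c i - alpha j).

Definition Zc (R : realFieldType) (N : nat) (b c : 'I_N -> R) (i j : 'I_N) : R :=
  ((b i - b j) * (c i - c j)) / ((b i - c j) * (c i - b j)).

Definition fsol (R : realFieldType) (n N : nat) (alpha : 'I_n -> R)
  (A b c : 'I_N -> R) (s : 'I_n -> int) (i : 'I_N) : R :=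
  A i * \prod_(j < n) (Bc alpha b c i j) ^ (s j).

Definition tau (R : realFieldType) (n N : nat) (alpha : 'I_n -> R)
  (A b c : 'I_N -> R) (s : 'I_n -> int) : R :=
  \sum_(T : {set 'I_N})
    (\prod_(i in T) \prod_(j in T | (i < j)%N) Zc b c i j) *
    \prod_(i in T) fsol alpha A b c s i.

Definition shift (n : nat) (s : 'I_n -> int) (i : 'I_n) : 'I_n -> int :=
  fun l => s l + (l == i)%:Z.

Definition swapb (R : realFieldType) (N : nat) (b c : 'I_N -> R) (k : 'I_N) : 'I_N -> R :=
  fun i => if i == k then c k else b i.
Definition swapc (R : realFieldType) (N : nat) (b c : 'I_N -> R) (k : 'I_N) : 'I_N -> R :=
  fun i => if i == k then b k else c i.

Definition adjA (R : realFieldType) (N : nat) (A b c : 'I_N -> R) (k : 'I_N) : 'I_N -> R :=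
  fun j => if j == k then (A k)^-1 else A j / Zc b c k j.

Definition vratio (R : realFieldType) (n : nat) (alpha : 'I_n -> R) (t : ('I_n -> int) -> R)
  (s : 'I_n -> int) (i j : 'I_n) : R :=
  (alpha i - alpha j) * (t s * t (shift (shift s i) j)) / (t (shift s i) * t (shift s j)).

(* Main.v *)
Require Import Defs.
From mathcomp Require Import all_boot all_order all_algebra.
Set Implicit Arguments. Unset Strict Implicit. Unset Printing Implicit Defensive.
Import Order.TTheory GRing.Theory Num.Theory.
Local Open Scope ring_scope.

From mathcomp Require Import ring.
Lemma PkE (R : realFieldType) N (Z : 'I_N -> 'I_N -> R) (hZ : forall i j, Z i j = Z j i) (k : 'I_N) (U : {set 'I_N}) :
  k \notin U ->
  \prod_(i in k |: U) \prod_(j in k |: U | (i < j)%N) Z i j =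
  (\prod_(j in U) Z k j) * \prod_(i in U) \prod_(j in U | (i < j)%N) Z i j.
Proof.
move=> kU.
have E1: \prod_(j in k |: U | (k < j)%N) Z k j = \prod_(j in U | (k<j)%N) Z k j.
  by rewrite big_mkcondr big_setU1 //= ltnn mul1r -big_mkcondr.
have E2: forall i, i \in U -> \prod_(j in k |: U | (i < j)%N) Z i j = (if (i<k)%N then Z k i else 1) * \prod_(j in U | (i<j)%N) Z i j.
  by move=> i _; rewrite big_mkcondr big_setU1 //= -big_mkcondr hZ.
rewrite big_setU1 //= E1 (eq_bigr _ E2) big_split /= mulrA; congr (_ * _).
rewrite [X in X * _]big_mkcondr -big_split /=; apply: eq_bigr => j jU.
case: ltngtP => [h1|h1|h1].
- by rewrite mulr1.
- by rewrite mul1r.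
- by move: kU; rewrite (_ : k = j) ?jU //; apply: val_inj.
Qed.

Lemma P_eq (R : realFieldType) N (Z Z' : 'I_N -> 'I_N -> R) (U : {set 'I_N}) :
  (forall i j, i \in U -> j \in U -> Z i j = Z' i j) ->
  \prod_(i in U) \prod_(j in U | (i < j)%N) Z i j =
  \prod_(i in U) \prod_(j in U | (i < j)%N) Z' i j.
Proof.
move=> h; apply: eq_bigr => i iU; apply: eq_bigr => j /andP [jU _]; exact: h.
Qed.

Lemma Zc_sym (R : realFieldType) N (b c : 'I_N -> R) x y : Zc b c x y = Zc b c y x.
Proof. by rewrite /Zc; congr (_ / _); ring. Qed.

Theorem corollary8p9 (R : realFieldType) (n N : nat) (alpha : 'I_n -> R)
  (A b c : 'I_N -> R)
  (hA : forall i, A i != 0)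
  (hb : forall i l, b i != alpha l)
  (hc : forall i l, c i != alpha l)
  (hf : forall i, fpoly alpha (b i) = fpoly alpha (c i))
  (hbc : forall i j, i != j -> b i != c j)
  (hbb : forall i j, i != j -> b i != b j)
  (hcc : forall i j, i != j -> c i != c j)
  (k : 'I_N) (s : 'I_n -> int) (i j : 'I_n) (hij : i != j)
  (hden1 : tau alpha A (swapb b c k) (swapc b c k) (shift s i) *
           tau alpha A (swapb b c k) (swapc b c k) (shift s j) != 0)
  (hden2 : tau alpha (adjA A b c k) b c (shift s i) *
           tau alpha (adjA A b c k) b c (shift s j) != 0) :
  vratio alpha (tau alpha A (swapb b c k) (swapc b c k)) s i j =
  vratio alpha (tau alpha (adjA A b c k) b c) s i j.
Proof.
set bs := swapb b c k; set cs := swapc b c k; set Aa := adjA A b c k.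
have hB : forall l, Bc alpha b c k l != 0.
  by move=> l; rewrite /Bc mulf_neq0 ?invr_eq0 // subr_eq0.
have hBV : forall l, (Bc alpha b c k l)^-1 != 0 by move=> l; rewrite invr_eq0.
pose g (t : 'I_n -> int) := A k * \prod_(l < n) ((Bc alpha b c k l)^-1) ^ (t l).
have Zsym : forall x y, Zc b c x y = Zc b c y x.
  exact: Zc_sym.
have Zs1 : forall x y, x != k -> y != k -> Zc bs cs x y = Zc b c x y.
  by move=> x y hx hy; rewrite /Zc /bs /cs /swapb /swapc (negPf hx) (negPf hy).
have Zs2 : forall y, y != k -> Zc bs cs k y = (Zc b c k y)^-1.
  move=> y hy; rewrite /Zc /bs /cs /swapb /swapc (negPf hy) eqxx invf_div.
  by congr (_ / _); rewrite mulrC.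
have Znz : forall y, y != k -> Zc b c k y != 0.
  move=> y hy; have hy' : k != y by rewrite eq_sym.
  rewrite /Zc mulf_neq0 ?invr_eq0 ?mulf_neq0 // subr_eq0 ?hbb ?hcc ?hbc //.
  by rewrite eq_sym hbc // eq_sym.
have key : forall t, tau alpha A bs cs t = g t * tau alpha Aa b c t.
  move=> t.
  set f := fsol alpha A b c t.
  have fsk : fsol alpha A bs cs t k = g t.
    rewrite /fsol /g; congr (_ * _); apply: eq_bigr => l _.
    by rewrite /Bc /bs /cs /swapb /swapc eqxx invf_div.
  have fsx : forall x, x != k -> fsol alpha A bs cs t x = f x.
    move=> x hx; rewrite /f /fsol; congr (_ * _); apply: eq_bigr => l _.
    by rewrite /Bc /bs /cs /swapb /swapc (negPf hx).
  have fak : g t * fsol alpha Aa b c t k = 1.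
    rewrite /g /fsol /Aa /adjA eqxx mulrACA mulfV // mul1r -big_split /=.
    by apply: big1 => l _; rewrite -expfzMl mulVf // exp1rz.
  have fax : forall x, x != k -> fsol alpha Aa b c t x = f x / Zc b c k x.
    by move=> x hx; rewrite /f /fsol /Aa /adjA (negPf hx) mulrAC.
  pose tog (T : {set 'I_N}) := if k \in T then T :\ k else k |: T.
  have togK : involutive tog.
    move=> T; rewrite /tog; case: (boolP (k \in T)) => kT.
    - by rewrite setD11 setD1K.
    - by rewrite setU11 setU1K.
  rewrite /tau [in RHS](reindex_inj (inv_inj togK)) mulr_sumr; apply: eq_bigr => T _.
  have prodfa : forall U : {set 'I_N}, k \notin U ->
      \prod_(x in U) fsol alpha Aa b c t x =
      (\prod_(x in U) f x) * (\prod_(x in U) Zc b c k x)^-1.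
    move=> U kU; rewrite -prodfV -big_split /=; apply: eq_bigr => x xU.
    by rewrite fax //; apply: contraNneq kU => <-.
  have prodfs : forall U : {set 'I_N}, k \notin U ->
      \prod_(x in U) fsol alpha A bs cs t x = \prod_(x in U) f x.
    move=> U kU; apply: eq_bigr => x xU.
    by rewrite fsx //; apply: contraNneq kU => <-.
  have PZs : forall U : {set 'I_N}, k \notin U ->
      \prod_(x in U) \prod_(y in U | (x < y)%N) Zc bs cs x y =
      \prod_(x in U) \prod_(y in U | (x < y)%N) Zc b c x y.
    move=> U kU; apply: P_eq => x y xU yU; apply: Zs1.
    - by apply: contraNneq kU => <-.
    - by apply: contraNneq kU => <-.
  have hx : forall U : {set 'I_N}, k \notin U -> \prod_(x in U) Zc b c k x != 0.
    move=> U kU; apply/prodf_neq0 => x xU; apply: Znz.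
    by apply: contraNneq kU => <-.
  rewrite /tog; case: (boolP (k \in T)) => kT.
  - have [U kU ->] : exists2 U : {set 'I_N}, k \notin U & T = k |: U.
      by exists (T :\ k); rewrite ?setD11 ?setD1K.
    rewrite setU1K // (PkE (@Zc_sym _ _ bs cs) kU). rewrite big_setU1 //= fsk prodfs // PZs //.
    rewrite prodfa // (eq_bigr (fun x => (Zc b c k x)^-1)); last first.
      by move=> x xU; apply: Zs2; apply: contraNneq kU => <-.
    rewrite prodfV; move: (hx U kU); set X := \prod_(x in U) Zc b c k x => hX.
    field.
    by rewrite hX.
  - idtac.
    rewrite (PkE (@Zc_sym _ _ b c) kT) big_setU1 //= prodfs // PZs // prodfa //.
    move: (hx T kT); set X := \prod_(x in T) Zc b c k x => hX.
    rewrite -[LHS]mul1r -fak.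
    field.
    by rewrite hX.
rewrite /vratio !key.
have gE : g s * g (shift (shift s i) j) = g (shift s i) * g (shift s j).
  rewrite /g mulrACA [RHS]mulrACA -!big_split /=; congr (_ * _).
  apply: eq_bigr => l _; rewrite -!expfzDr //; congr (_ ^ _).
  rewrite /shift; ring.
have gnz : forall t, g t != 0.
  by move=> t; rewrite /g mulf_neq0 //; apply/prodf_neq0 => l _; rewrite expfz_neq0.
rewrite [X in _ * X / _]mulrACA gE.
move: (gnz (shift s i)) (gnz (shift s j)) hden2.
set G1 := g (shift s i); set G2 := g (shift s j).
set t1 := tau alpha Aa b c (shift s i); set t2 := tau alpha Aa b c (shift s j).
move=> h1 h2 h3.
field.
by move: h3; rewrite mulf_eq0 negb_or => /andP [-> ->]; rewrite h1 h2.
Qed.
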